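(* Let $s,y\in\mathbb{R}^n$ with $s^Ty>0$, let $\alpha^{BB1}=\dfrac{s^Ts}{s^Ty}$ and $\alpha^{BB2}=\dfrac{s^Ty}{y^Ty}$, and for $\gamma\in[0,1]$ let $\alpha=\gamma\alpha^{BB1}+(1-\gamma)\alpha^{BB2}$. Then there exists $\tau\in[0,1]$ such that $D=\alpha I$ is a solution of $$\min_{D=\beta I,\ \beta>0}\ \big\|\tau(D^{-1}s-y)+(1-\tau)(s-Dy)\big\| ,$$ where $I$ is the $n\times n$ identity matrix.
   Context: $\|\cdot\|$ is the Euclidean norm. In the paper, $s=s_{k-1}=x_k-x_{k-1}$ and $y=y_{k-1}=g_k-g_{k-1}$ are differences of consecutive iterates and gradients, and $\alpha^{BB1},\alpha^{BB2}$ are the long and short Barzilai–Borwein stepsizes. *)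

(* Defs.v *)
From HB Require Import structures.
From mathcomp Require Import all_boot all_order all_algebra.
Set Implicit Arguments. Unset Strict Implicit. Unset Printing Implicit Defensive.
Import Order.TTheory GRing.Theory Num.Theory.
Local Open Scope ring_scope.

Definition dotv (R : rcfType) (n : nat) (u v : 'cV[R]_n) : R := (u^T *m v) 0 0.

Definition enorm (R : rcfType) (n : nat) (v : 'cV[R]_n) : R := Num.sqrt (dotv v v).

Definition alpha_BB1 (R : rcfType) (n : nat) (s y : 'cV[R]_n) : R := dotv s s / dotv s y.
Definition alpha_BB2 (R : rcfType) (n : nat) (s y : 'cV[R]_n) : R := dotv s y / dotv y y.

Definition bb_obj (R : rcfType) (n : nat) (s y : 'cV[R]_n) (tau beta : R) : R :=
  let D : 'M[R]_n := beta%:M in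
  enorm (tau *: (invmx D *m s - y) + (1 - tau) *: (s - D *m y)).

(* Main.v *)
Require Import Defs.
From HB Require Import structures.
From mathcomp Require Import all_boot all_order all_algebra.
From mathcomp Require Import ring lra.
Import Order.TTheory GRing.Theory Num.Theory.
Set Implicit Arguments. Unset Strict Implicit.
Local Open Scope ring_scope.

Section H.
Variables (R : rcfType) (n : nat).
Implicit Types (u v : 'cV[R]_n).

Lemma dotv_ge0 v : 0 <= dotv v v.
Proof.
rewrite /dotv mxE; apply: sumr_ge0 => i _; rewrite mxE -expr2; exact: sqr_ge0.
Qed.

Lemma dotvC u v : dotv u v = dotv v u.
Proof. by rewrite /dotv -[v^T *m u]trmxK trmx_mul trmxK [in RHS]mxE. Qed.

Lemma dotvE u v : dotv u v = \sum_i u i 0 * v i 0.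
Proof. by rewrite /dotv mxE; apply: eq_bigr => i _; rewrite mxE. Qed.

Lemma dotv_quad p q u v :
  dotv (p *: u - q *: v) (p *: u - q *: v) =
  p ^+ 2 * dotv u u - 2 * p * q * dotv u v + q ^+ 2 * dotv v v.
Proof.
rewrite !dotvE !mulr_sumr -sumrB -big_split /=.
by apply: eq_bigr => i _; rewrite !mxE; ring.
Qed.

Lemma obj_eq (s y : 'cV[R]_n) (t b : R) : b != 0 ->
  bb_obj s y t b = enorm ((t / b + (1 - t)) *: s - (t + (1 - t) * b) *: y).
Proof.
move=> b0; rewrite /bb_obj invmx_scalar !mul_scalar_mx.
congr enorm.
by apply/matrixP => i j; rewrite !mxE; ring.
Qed.
End H.

Theorem theorem1 (R : rcfType) (n : nat) (s y : 'cV[R]_n) (gamma : R) :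
  0 < dotv s y -> 0 <= gamma <= 1 ->
  let alpha := gamma * alpha_BB1 s y + (1 - gamma) * alpha_BB2 s y in
  exists tau : R, 0 <= tau <= 1 /\ 0 < alpha /\
    (forall beta : R, 0 < beta -> bb_obj s y tau alpha <= bb_obj s y tau beta).
Proof.
move=> hb /andP[g0 g1] alpha.
rewrite /alpha /alpha_BB1 /alpha_BB2 {alpha}.
have hX : forall t be : R, be != 0 -> bb_obj s y t be =
   Num.sqrt ((t / be + (1 - t)) ^+ 2 * dotv s s
     - 2 * (t / be + (1 - t)) * (t + (1 - t) * be) * dotv s y
     + (t + (1 - t) * be) ^+ 2 * dotv y y).
  by move=> t be hbe; rewrite obj_eq // /enorm dotv_quad.
have hQ : forall be : R, 0 <= dotv s s - 2 * be * dotv s y + be ^+ 2 * dotv y y.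
  move=> be; have := dotv_ge0 (1 *: s - be *: y); rewrite dotv_quad.
  by rewrite expr1n mul1r mulr1.
have hQ' : forall be : R, 0 <= be ^+ 2 * dotv s s - 2 * be * dotv s y + dotv y y.
  move=> be; have := dotv_ge0 (be *: s - 1 *: y); rewrite dotv_quad.
  by rewrite expr1n mul1r mulr1.
have a0 := dotv_ge0 s; have c0 := dotv_ge0 y.
move: hX hQ hQ' a0 c0 hb.
set a := dotv s s; set b := dotv s y; set c := dotv y y.
move=> hX hQ hQ' a0 c0 hb.
have b0 : b != 0 by rewrite gt_eqF.
have cpos : 0 < c.
  rewrite lt_def c0 andbT; apply/eqP => ce.
  have e : 2 * ((a + b) / (2 * b)) * b = a + b by field; rewrite b0.
  have := hQ ((a + b) / (2 * b)); rewrite ce e; lra.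
have apos : 0 < a.
  rewrite lt_def a0 andbT; apply/eqP => ae.
  have e : 2 * ((c + b) / (2 * b)) * b = c + b by field; rewrite b0.
  have := hQ' ((c + b) / (2 * b)); rewrite ae e; lra.
have c0' : c != 0 by rewrite gt_eqF.
have CS : b ^+ 2 <= a * c.
  have e : a * c - b ^+ 2 = c * (a - 2 * (b / c) * b + (b / c) ^+ 2 * c) by field.
  rewrite -subr_ge0 e; apply: mulr_ge0; [exact: ltW | exact: hQ].
set A1 := a / b; set A2 := b / c.
have A2pos : 0 < A2 by rewrite divr_gt0.
have A12 : A2 <= A1.
  rewrite /A1 /A2 ler_pdivrMr // mulrAC ler_pdivlMr //; lra.
set al := gamma * A1 + (1 - gamma) * A2.
have al1 : A2 <= al by rewrite /al; nra.
have al2 : al <= A1 by rewrite /al; nra.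
have alpos : 0 < al := lt_le_trans A2pos al1.
have al0 : al != 0 by rewrite gt_eqF.
have hN : 0 <= c * al - b.
  have -> : c * al - b = c * (al - A2) by rewrite /A2; field.
  apply: mulr_ge0; [exact: ltW|lra].
have hU : 0 <= a - b * al.
  have -> : a - b * al = b * (A1 - al) by rewrite /A1; field.
  apply: mulr_ge0; [exact: ltW|lra].
set N := (c * al - b) * al ^+ 2; set U := a - b * al.
have N0 : 0 <= N by rewrite /N mulr_ge0 // exprn_ge0 // ltW.
have [Dz|Dpos] := leP (U + N) 0.
  have hU2 : 0 <= U := hU. have U0 : U = 0 by move: hU2 N0 Dz; clearbody U N; move=> *; lra.
  have N00 : N = 0 by move: hU2 N0 Dz; clearbody U N; move=> *; lra.
  exists 0; split; first by rewrite lexx ler01.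
  split=> // be hbe.
  rewrite hX // hX ?gt_eqF //.
  have -> : (0 / al + (1 - 0)) ^+ 2 * a - 2 * (0 / al + (1 - 0)) * (0 + (1 - 0) * al) * b
      + (0 + (1 - 0) * al) ^+ 2 * c = U + N / al by rewrite /U /N; field.
  rewrite U0 N00 mul0r addr0 sqrtr0; exact: sqrtr_ge0.
have D0 : U + N != 0 by rewrite gt_eqF.
exists (N / (U + N)); split.
  apply/andP; split; first by rewrite divr_ge0 // ltW.
  by rewrite ler_pdivrMr // mul1r -subr_ge0 addrK.
split=> // be hbe.
have be0 : be != 0 by rewrite gt_eqF.
rewrite hX // hX // ler_sqrt; last first.
  set t := N / (U + N).
  have -> : (t / be + (1 - t)) ^+ 2 * a - 2 * (t / be + (1 - t)) * (t + (1 - t) * be) * b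
     + (t + (1 - t) * be) ^+ 2 * c
     = (t / be + (1 - t)) ^+ 2 * (a - 2 * be * b + be ^+ 2 * c) by field.
  by rewrite mulr_ge0 ?sqr_ge0.
set r1 := 2 * N * (U * a + (c * al - b) * al * U).
have r10 : 0 <= r1.
  rewrite /r1; apply: mulr_ge0; first by rewrite mulr_ge0.
  apply: addr_ge0; first by rewrite mulr_ge0 // ltW.
  by rewrite mulr_ge0 // mulr_ge0 // ltW.
set Rq := al ^+ 2 * U ^+ 2 * c * be ^+ 2 + r1 * be + N ^+ 2 * a.
have Rq0 : 0 <= Rq.
  rewrite /Rq; apply: addr_ge0; [apply: addr_ge0|].
  - by rewrite !mulr_ge0 // ?exprn_ge0 // ?sqr_ge0 // ltW.
  - by rewrite mulr_ge0 // ltW.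
  - by rewrite mulr_ge0 // ?sqr_ge0 // ltW.
rewrite -subr_ge0.
have -> : forall t : R, t = N / (U + N) ->
   ((t / be + (1 - t)) ^+ 2 * a - 2 * (t / be + (1 - t)) * (t + (1 - t) * be) * b
     + (t + (1 - t) * be) ^+ 2 * c) -
   ((t / al + (1 - t)) ^+ 2 * a - 2 * (t / al + (1 - t)) * (t + (1 - t) * al) * b
     + (t + (1 - t) * al) ^+ 2 * c)
   = (be - al) ^+ 2 * Rq / ((U + N) ^+ 2 * al ^+ 2 * be ^+ 2).
  move=> t ->; rewrite /Rq /r1 /N /U; field.
  by apply/and3P; split.
  apply: divr_ge0; first by rewrite mulr_ge0 ?sqr_ge0.
  by rewrite -!exprMn sqr_ge0.
by [].
Qed.
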